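(* Let $d\ge1$ and $x,y,u,v\in\mathbb{R}^d_{>0}$, and set $a^\pm:=s^\pm(x,y)$, $b^\pm:=s^\pm(u,v)$. Assume that $\frac{y_i}{x_i}\in\{a^-,a^+\}$ and $\frac{v_i}{u_i}\in\{b^-,b^+\}$ for all $1\le i\le d$. Then there exist $x',y',u',v'\in\mathbb{R}^2_{>0}$ such that \[ s^\pm(x',y')=a^\pm,\qquad s^\pm(u',v')=b^\pm,\qquad F_2(x',y';u',v')\ge F_d(x,y;u,v). \]
   Context: For $x,y\in\mathbb{R}^d_{>0}$ define $s^+(x,y)=\max_i \frac{y_i}{x_i}$ and $s^-(x,y)=\min_i\frac{y_i}{x_i}$. Define $F_d:(\mathbb{R}^d_{>0})^4\to\mathbb{R}_{>0}$ by $F_d(x,y;u,v)=\frac{(x\cdot u)(y\cdot v)}{(x\cdot v)(y\cdot u)}$, where $\cdot$ is the standard Euclidean dot product; $F_2$ is the case $d=2$. *)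

(* Defs.v *)
From mathcomp Require Import all_boot all_order all_algebra.
Set Implicit Arguments. Unset Strict Implicit. Unset Printing Implicit Defensive.
Import Order.TTheory GRing.Theory Num.Theory.
Local Open Scope ring_scope.

(* Vectors in R^n are functions 'I_n -> R.  Dimension d >= 1 is encoded
   as n.+1 so that max/min over the index set is well defined. *)

Definition splus (R : realFieldType) (n : nat) (x y : 'I_n.+1 -> R) : R :=
  \big[Num.max/(y ord0 / x ord0)]_(i < n.+1) (y i / x i).

Definition sminus (R : realFieldType) (n : nat) (x y : 'I_n.+1 -> R) : R :=
  \big[Num.min/(y ord0 / x ord0)]_(i < n.+1) (y i / x i).

Definition dotp (R : realFieldType) (n : nat) (x y : 'I_n -> R) : R :=
  \sum_(i < n) x i * y i.

Definition Fd (R : realFieldType) (n : nat) (x y u v : 'I_n -> R) : R :=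
  (dotp x u * dotp y v) / (dotp x v * dotp y u).

Definition posvec (R : realFieldType) (n : nat) (x : 'I_n -> R) : Prop :=
  forall i, 0 < x i.

(* Main.v *)
Require Import Defs.
From mathcomp Require Import all_boot all_order all_algebra.
From mathcomp Require Import ring.
Import Order.TTheory GRing.Theory Num.Theory.
Local Open Scope ring_scope.

Section Aux.
Variable R : realFieldType.

Lemma bigmax_ge_seq (I : eqType) (r : seq I) (F : I -> R) x0 i :
  i \in r -> F i <= \big[Num.max/x0]_(j <- r) F j.
Proof.
elim: r => [//|a r IH]; rewrite inE big_cons => /orP [/eqP ->|/IH h].
  by rewrite le_max lexx.
by rewrite le_max h orbT.
Qed.

Lemma bigmin_le_seq (I : eqType) (r : seq I) (F : I -> R) x0 i :
  i \in r -> \big[Num.min/x0]_(j <- r) F j <= F i.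
Proof.
elim: r => [//|a r IH]; rewrite inE big_cons => /orP [/eqP ->|/IH h].
  by rewrite ge_min lexx.
by rewrite ge_min h orbT.
Qed.

Lemma bigmax_ge k (F : 'I_k -> R) x0 i : F i <= \big[Num.max/x0]_(j < k) F j.
Proof. by apply: bigmax_ge_seq; rewrite mem_index_enum. Qed.

Lemma bigmin_le k (F : 'I_k -> R) x0 i : \big[Num.min/x0]_(j < k) F j <= F i.
Proof. by apply: bigmin_le_seq; rewrite mem_index_enum. Qed.

Lemma bigmin_gt0 k (F : 'I_k -> R) x0 :
  0 < x0 -> (forall i, 0 < F i) -> 0 < \big[Num.min/x0]_(j < k) F j.
Proof.
move=> h0 hF; apply: (big_ind (fun m => 0 < m)) => //.
by move=> a b ha hb; rewrite lt_min ha hb.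
Qed.

Lemma lin4 k (w a b : 'I_k -> R) c0 c1 c2 c3 :
  \sum_i w i * (c0 + c1 * a i + c2 * b i + c3 * (a i * b i)) =
  c0 * (\sum_i w i) + c1 * (\sum_i a i * w i) + c2 * (\sum_i b i * w i)
  + c3 * (\sum_i a i * b i * w i).
Proof.
rewrite !mulr_sumr -!big_split /=; apply: eq_bigr => i _; ring.
Qed.

Lemma sum_pos k (F : 'I_k.+1 -> R) : (forall i, 0 < F i) -> 0 < \sum_i F i.
Proof.
move=> h; rewrite big_ord_recl; apply: ltr_wpDr; last exact: h.
by apply: sumr_ge0 => i _; apply: ltW.
Qed.

Definition F2val (am ap bm bp w1 w2 : R) :=
  (w1 + w2) * (am * bm * w1 + ap * bp * w2) /
  ((bm * w1 + bp * w2) * (am * w1 + ap * w2)).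

Lemma two_dim (am ap bm bp w1 w2 : R) :
  0 < am -> am <= ap -> 0 < bm -> bm <= bp -> 0 < w1 -> 0 < w2 ->
  exists x' y' u' v' : 'I_2 -> R,
    (posvec x' /\ posvec y' /\ posvec u' /\ posvec v') /\
    (splus x' y' = ap /\ sminus x' y' = am) /\
    (splus u' v' = bp /\ sminus u' v' = bm) /\
    Fd x' y' u' v' = F2val am ap bm bp w1 w2.
Proof.
move=> ham hab hbm hbb hw1 hw2.
have hap : 0 < ap by apply: lt_le_trans hab.
have hbp : 0 < bp by apply: lt_le_trans hbb.
exists (fun _ : 'I_2 => 1), (fun i : 'I_2 => if val i == 0%N then am else ap),
  (fun i : 'I_2 => if val i == 0%N then w1 else w2),
  (fun i : 'I_2 => if val i == 0%N then bm * w1 else bp * w2).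
have w1n : w1 != 0 by rewrite gt_eqF.
have w2n : w2 != 0 by rewrite gt_eqF.
split; [|split; [|split]].
- split; [by move=> i|split; [|split]] => i; case: ifP => _ //;
  exact: mulr_gt0.
- rewrite /splus /sminus !big_ord_recl !big_ord0 /= !divr1.
  by rewrite (max_l hab) (max_r hab) (min_r hab) minxx.
- rewrite /splus /sminus !big_ord_recl !big_ord0 /= !mulfK //.
  by rewrite (max_l hbb) (max_r hbb) (min_r hbb) minxx.
- rewrite /Fd /F2val /dotp !big_ord_recl !big_ord0 /=.
  congr (_ / (_ * _)); ring.
Qed.

Lemma F2_ge1 (am ap bm bp w1 w2 : R) :
  0 < am -> am <= ap -> 0 < bm -> bm <= bp -> 0 < w1 -> 0 < w2 ->
  1 <= F2val am ap bm bp w1 w2.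
Proof.
move=> ham hab hbm hbb hw1 hw2.
have hap : 0 < ap by apply: lt_le_trans hab.
have hbp : 0 < bp by apply: lt_le_trans hbb.
have hd : 0 < (bm * w1 + bp * w2) * (am * w1 + ap * w2).
  by apply: mulr_gt0; apply: addr_gt0; apply: mulr_gt0.
rewrite /F2val ler_pdivlMr // mul1r -subr_ge0.
have -> : (w1 + w2) * (am * bm * w1 + ap * bp * w2) -
    (bm * w1 + bp * w2) * (am * w1 + ap * w2) =
    (ap - am) * (bp - bm) * (w1 * w2) by ring.
by apply: mulr_ge0; [apply: mulr_ge0; rewrite subr_ge0|apply: mulr_ge0; apply: ltW].
Qed.

Lemma final (am ap bm bp S P Q T : R) :
  0 < am -> am <= ap -> 0 < bm -> bm <= bp ->
  0 < S -> 0 < P -> 0 < Q -> 0 < T ->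
  let l1 := ap*bp*S - bp*P - ap*Q + T in
  let l4 := am*bm*S - bm*P - am*Q + T in
  let l2 := -(ap*bm*S) + bm*P + ap*Q - T in
  let l3 := -(am*bp*S) + bp*P + am*Q - T in
  0 <= l2 -> 0 <= l3 -> 0 < l1 -> 0 < l4 ->
  0 < (ap - am) * (bp - bm) ->
  S * T / (Q * P) <= F2val am ap bm bp l1 l4.
Proof.
move=> ham hab hbm hbb hS hP hQ hT l1 l4 l2 l3 h2 h3 h1 h4 hD.
have hap : 0 < ap by apply: lt_le_trans hab.
have hbp : 0 < bp by apply: lt_le_trans hbb.
have hQ' : 0 < bm * l1 + bp * l4 by apply: addr_gt0; apply: mulr_gt0.
have hP' : 0 < am * l1 + ap * l4 by apply: addr_gt0; apply: mulr_gt0.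
set D := (ap - am) * (bp - bm).
set S' := l1 + l4.
set T' := am * bm * l1 + ap * bp * l4.
set Q' := bm * l1 + bp * l4.
set P' := am * l1 + ap * l4.
set E := S' * T' * (Q * P) - S * T * (Q' * P').
set G := l1 * l4 * ((am * l2 + ap * l3) * (bm * (l1 + l3) + bp * (l2 + l4))
   + (am * l1 + ap * l4) * (bm * l3 + bp * l2))
   + l2 * l3 * (am * l1 + ap * l4) * (bm * l1 + bp * l4).
have a1 : 0 <= l1 by exact: ltW.
have a4 : 0 <= l4 by exact: ltW.
have aam : 0 <= am by exact: ltW.
have aap : 0 <= ap by exact: ltW.
have abm : 0 <= bm by exact: ltW.
have abp : 0 <= bp by exact: ltW.
have hG : 0 <= G.
  rewrite /G.
  have X1 : 0 <= am * l2 + ap * l3 by rewrite addr_ge0 // mulr_ge0.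
  have X2 : 0 <= bm * (l1 + l3) + bp * (l2 + l4) by rewrite addr_ge0 // mulr_ge0 // addr_ge0.
  have X3 : 0 <= am * l1 + ap * l4 by rewrite addr_ge0 // mulr_ge0.
  have X4 : 0 <= bm * l3 + bp * l2 by rewrite addr_ge0 // mulr_ge0.
  have X5 : 0 <= bm * l1 + bp * l4 by rewrite addr_ge0 // mulr_ge0.
  by rewrite addr_ge0 // ?mulr_ge0 // addr_ge0 // mulr_ge0.
have hE : D * E = G.
  rewrite /D /E /G /S' /T' /Q' /P' /l1 /l2 /l3 /l4; ring.
have hE0 : 0 <= E.
  by move: hG; rewrite -hE pmulr_rge0.
rewrite /F2val -/S' -/T' -/Q' -/P' -subr_ge0.
have hQn : Q != 0 by rewrite gt_eqF.
have hPn : P != 0 by rewrite gt_eqF.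
have hQ'n : Q' != 0 by rewrite gt_eqF.
have hP'n : P' != 0 by rewrite gt_eqF.
have -> : S' * T' / (Q' * P') - S * T / (Q * P) = E / ((Q * P) * (Q' * P')).
  by rewrite /E; field; rewrite hP'n hQ'n hPn hQn.
apply: divr_ge0 => //; apply: ltW; apply: mulr_gt0; exact: mulr_gt0.
Qed.

End Aux.

Theorem mainTheorem7 (R : realFieldType) (n : nat)
  (x y u v : 'I_n.+1 -> R) :
  posvec x -> posvec y -> posvec u -> posvec v ->
  (forall i, y i / x i = sminus x y \/ y i / x i = splus x y) ->
  (forall i, v i / u i = sminus u v \/ v i / u i = splus u v) ->
  exists x' y' u' v' : 'I_2 -> R,
    (posvec x' /\ posvec y' /\ posvec u' /\ posvec v') /\
    (splus x' y' = splus x y /\ sminus x' y' = sminus x y) /\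
    (splus u' v' = splus u v /\ sminus u' v' = sminus u v) /\
    Fd x' y' u' v' >= Fd x y u v.
Proof.
move=> hx hy hu hv _ _.
set am := sminus x y; set ap := splus x y; set bm := sminus u v; set bp := splus u v.
pose al i := y i / x i; pose be i := v i / u i; pose w i := x i * u i.
have hxn i : x i != 0 by rewrite gt_eqF.
have hun i : u i != 0 by rewrite gt_eqF.
have hal i : am <= al i /\ al i <= ap.
  by split; [exact: bigmin_le | exact: bigmax_ge].
have hbe i : bm <= be i /\ be i <= bp.
  by split; [exact: bigmin_le | exact: bigmax_ge].
have ham : 0 < am.
  by apply: bigmin_gt0 => [|i]; apply: divr_gt0.
have hbm : 0 < bm.
  by apply: bigmin_gt0 => [|i]; apply: divr_gt0.
have hab : am <= ap by case: (hal ord0) => h1 h2; exact: le_trans h1 h2.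
have hbb : bm <= bp by case: (hbe ord0) => h1 h2; exact: le_trans h1 h2.
have hal0 i : 0 < al i by apply: divr_gt0.
have hbe0 i : 0 < be i by apply: divr_gt0.
have hw0 i : 0 < w i by apply: mulr_gt0.
set S := \sum_i w i.
set P := \sum_i al i * w i.
set Q := \sum_i be i * w i.
set T := \sum_i al i * be i * w i.
have hS : 0 < S by apply: sum_pos.
have hP : 0 < P by apply: sum_pos => i; apply: mulr_gt0.
have hQ : 0 < Q by apply: sum_pos => i; apply: mulr_gt0.
have hT : 0 < T by apply: sum_pos => i; apply: mulr_gt0 => //; apply: mulr_gt0.
have hF : Fd x y u v = S * T / (Q * P).
  rewrite /Fd /dotp; congr (_ * _ / (_ * _)); apply: eq_bigr => i _;
  rewrite /al /be /w; field; rewrite ?hxn ?hun //.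
have lin a0 a1 a2 a3 : \sum_i w i * (a0 + a1 * al i + a2 * be i + a3 * (al i * be i))
   = a0 * S + a1 * P + a2 * Q + a3 * T by exact: lin4.
have L1 : 0 <= ap*bp*S - bp*P - ap*Q + T.
  have -> : ap*bp*S - bp*P - ap*Q + T = \sum_i w i * ((ap - al i) * (bp - be i)).
    rewrite (eq_bigr (fun i => w i * (ap*bp + (-bp) * al i + (-ap) * be i + 1 * (al i * be i)))) => [|i _]; last by ring.
    rewrite lin; ring.
  apply: sumr_ge0 => i _; apply: mulr_ge0; first exact: ltW.
  case: (hal i) (hbe i) => ? ? [? ?]; apply: mulr_ge0; rewrite subr_ge0 //.
have L4 : 0 <= am*bm*S - bm*P - am*Q + T.
  have -> : am*bm*S - bm*P - am*Q + T = \sum_i w i * ((al i - am) * (be i - bm)).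
    rewrite (eq_bigr (fun i => w i * (am*bm + (-bm) * al i + (-am) * be i + 1 * (al i * be i)))) => [|i _]; last by ring.
    rewrite lin; ring.
  apply: sumr_ge0 => i _; apply: mulr_ge0; first exact: ltW.
  case: (hal i) (hbe i) => ? ? [? ?]; apply: mulr_ge0; rewrite subr_ge0 //.
have L2 : 0 <= -(ap*bm*S) + bm*P + ap*Q - T.
  have -> : -(ap*bm*S) + bm*P + ap*Q - T = \sum_i w i * ((ap - al i) * (be i - bm)).
    rewrite (eq_bigr (fun i => w i * (-(ap*bm) + bm * al i + ap * be i + (-1) * (al i * be i)))) => [|i _]; last by ring.
    rewrite lin; ring.
  apply: sumr_ge0 => i _; apply: mulr_ge0; first exact: ltW.
  case: (hal i) (hbe i) => ? ? [? ?]; apply: mulr_ge0; rewrite subr_ge0 //.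
have L3 : 0 <= -(am*bp*S) + bp*P + am*Q - T.
  have -> : -(am*bp*S) + bp*P + am*Q - T = \sum_i w i * ((al i - am) * (bp - be i)).
    rewrite (eq_bigr (fun i => w i * (-(am*bp) + bp * al i + am * be i + (-1) * (al i * be i)))) => [|i _]; last by ring.
    rewrite lin; ring.
  apply: sumr_ge0 => i _; apply: mulr_ge0; first exact: ltW.
  case: (hal i) (hbe i) => ? ? [? ?]; apply: mulr_ge0; rewrite subr_ge0 //.
have [hle|hlt] := lerP (S * T) (Q * P).
  have [x' [y' [u' [v' [hpos [hxy [huv hF2]]]]]]] :=
    @two_dim R _ _ _ _ _ _ ham hab hbm hbb ltr01 ltr01.
  exists x', y', u', v'; split => //; split => //; split => //.
  rewrite hF2 hF; apply: le_trans (@F2_ge1 R _ _ _ _ _ _ ham hab hbm hbb ltr01 ltr01).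
  rewrite ler_pdivrMr ?mul1r //; exact: mulr_gt0.
have hD : 0 < (ap - am) * (bp - bm).
  rewrite lt_def mulr_ge0 ?subr_ge0 // andbT mulf_eq0 !subr_eq0.
  apply/negP => /orP [/eqP ea | /eqP eb].
  - have eal i : al i = am by apply/eqP; rewrite eq_le; case: (hal i) => -> h; rewrite andbT -ea h.
    have eP : P = am * S by rewrite /P mulr_sumr; apply: eq_bigr => i _; rewrite eal.
    have eT : T = am * Q by rewrite /T mulr_sumr; apply: eq_bigr => i _; rewrite eal mulrA.
    have e : S * T = Q * P by rewrite eP eT; ring.
    by move: hlt; rewrite e ltxx.
  - have ebe i : be i = bm by apply/eqP; rewrite eq_le; case: (hbe i) => -> h; rewrite andbT -eb h.
    have eQ : Q = bm * S by rewrite /Q mulr_sumr; apply: eq_bigr => i _; rewrite ebe.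
    have eT : T = bm * P by rewrite /T mulr_sumr; apply: eq_bigr => i _; rewrite ebe; ring.
    have e : S * T = Q * P by rewrite eQ eT; ring.
    by move: hlt; rewrite e ltxx.
set l1 := ap*bp*S - bp*P - ap*Q + T in L1.
set l4 := am*bm*S - bm*P - am*Q + T in L4.
set l2 := -(ap*bm*S) + bm*P + ap*Q - T in L2.
set l3 := -(am*bp*S) + bp*P + am*Q - T in L3.
have hprod : 0 < l1 * l4.
  have -> : l1 * l4 = (ap - am) * (bp - bm) * (S * T - Q * P) + l2 * l3.
    rewrite /l1 /l2 /l3 /l4; ring.
  by apply: ltr_wpDr; [exact: mulr_ge0 | apply: mulr_gt0; rewrite // subr_gt0].
have h1 : 0 < l1.
  move: L1; rewrite le_eqVlt => /orP [/eqP e|//].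
  by move: hprod; rewrite -e mul0r ltxx.
have h4 : 0 < l4.
  move: L4; rewrite le_eqVlt => /orP [/eqP e|//].
  by move: hprod; rewrite -e mulr0 ltxx.
have [x' [y' [u' [v' [hpos [hxy [huv hF2]]]]]]] := @two_dim R _ _ _ _ _ _ ham hab hbm hbb h1 h4.
exists x', y', u', v'; split => //; split => //; split => //.
rewrite hF2 hF.
exact: (@final R _ _ _ _ _ _ _ _ ham hab hbm hbb hS hP hQ hT L2 L3 h1 h4 hD).
Qed.
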